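(* In the transactional panorama model with the lenses and metrics described in the context, for every lens $A$ among LCNB, LCMB, ICNB, $k$-GCNB, $k$-LCNB, $k$-LCMB we have $S(\mathrm{GCPB}) \le S(A) \le S(\mathrm{GCNB})$ and $I(\mathrm{GCPB}) \ge I(A) \ge I(\mathrm{GCNB})$.
   Context: A view graph is a DAG on a set $N$ of nodes (source data and views). Write transactions are processed one at a time; write transaction $w^{t_i}$ creates version $G^{t_i}$ with state set $V^{t_i}$ containing, for each node $n_k$, either its computed new result $v_k^{t_i}$, a placeholder $UC_k^{t_i}$ if $w^{t_i}$ updates $n_k$ but has not yet computed it, or its result from the previous version if $n_k$ is not updated. A version is committed once all its new results are computed; at any time there is the committed graph (most recently committed version, no UCs) and the latest graph (version of the most recent write transaction). Read transactions $r^{s_1},\dots,r^{s_m}$ each read the views in the current viewport and return immediately a set $H^{s_i}$ of states (results or UCs); $Time(r^{s_i})$ is its return time. A returned state's timestamp is that of its version. Lenses (rules for answering reads): GCPB returns the viewport states from the latest graph. GCNB returns them from the committed graph. LCNB returns them from the more recent of the committed and latest graphs that has zero UCs for the viewport. LCMB: if reading either the committed or the latest graph preserves monotonicity (no view gets a state with smaller timestamp than previously read), behave like LCNB; otherwise read the latest graph. ICNB returns, for each view independently, its most recently computed result. $k$-GCNB reads the latest graph if it has at most $k$ UCs in total, otherwise the committed graph. $k$-LCNB reads the more recent of the committed and latest graphs having at most $k$ UCs for the viewport. $k$-LCMB: if reading either graph preserves monotonicity, behave like $k$-LCNB; otherwise read the latest graph. Metrics for $R=\{r^{s_1},\dots,r^{s_m}\}$: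 invisibility $I(R)=\sum_{i=1}^{m-1}|H^{s_i}_{UC}|\,(Time(r^{s_{i+1}})-Time(r^{s_i}))$ where $H^{s_i}_{UC}$ is the set of UCs in $H^{s_i}$; staleness $S(R)=\sum_{i=1}^{m-1}\sum_{v_k^{t_j}\in H^{s_i}_{qr}}\mathbf{1}[v_k^{t_j}\notin V^{t_i}]\,(Time(r^{s_{i+1}})-Time(r^{s_i}))$ where $H^{s_i}_{qr}$ is the set of view results (non-UC states) in $H^{s_i}$ and $G^{t_i}$ is the latest version before $r^{s_i}$ starts. $S(A)$, $I(A)$ denote these metrics under lens $A$, where all lenses are compared on the same write transactions, the same order of computing new view results, and the same sequence of read transactions. *)

(* Defs.v *)
From HB Require Import structures.
From mathcomp Require Import all_boot all_order all_algebra.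
Set Implicit Arguments. Unset Strict Implicit. Unset Printing Implicit Defensive.
Import Order.TTheory GRing.Theory Num.Theory.
Local Open Scope ring_scope.

(* A scenario: nodes N of the view graph; write transactions w^{t_1..t_nw}
   (version 0 = the initial, fully computed graph); upd i = nodes updated by
   w^{t_i}; create i = time at which version G^{t_i} is created;
   comp i k = time at which the new result v_k^{t_i} is computed (k \in upd i);
   read transactions r^{s_0..s_(nr-1)} with return times rtime and viewports vp. *)
Record scenario (R : realFieldType) (N : finType) := Scenario {
  nw : nat;
  upd : nat -> {set N};
  create : nat -> R;
  comp : nat -> N -> R;
  nr : nat;
  rtime : nat -> R;
  vp : nat -> {set N} }.

(* A state: a result v_k^{t_j} (Res j) or a placeholder UC_k^{t_j} (UC j);
   the node k is given by the position. *)
Inductive state := Res of nat | UC of nat.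

Definition is_uc (s : state) : bool := if s is UC _ then true else false.

Definition same_state (s1 s2 : state) : bool :=
  match s1, s2 with
  | Res a, Res b => (a == b)%N
  | UC a, UC b => (a == b)%N
  | _, _ => false
  end.

Inductive lens :=
  | GCPB | GCNB | LCNB | LCMB | ICNB
  | kGCNB of nat | kLCNB of nat | kLCMB of nat.

Section Panorama.
Variables (R : realFieldType) (N : finType) (sc : scenario R N).

(* Well-formedness: results are computed after their version is created;
   write transactions are processed one at a time (version i commits before
   version i+1 is created); reads are in time order. *)
Definition wf : Prop :=
  [/\ (forall i, (1 <= i <= nw sc)%N -> forall k, k \in upd sc i ->
          create sc i <= comp sc i k),
      (forall i, (1 <= i < nw sc)%N -> forall k, k \in upd sc i ->
          comp sc i k <= create sc i.+1),
      (forall i, (1 <= i < nw sc)%N -> create sc i <= create sc i.+1) &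
      (forall i, (i.+1 < nr sc)%N -> rtime sc i <= rtime sc i.+1)].

(* the version whose state for node k is carried into version i *)
Fixpoint orig (i : nat) (k : N) : nat :=
  match i with
  | 0 => 0%N
  | i'.+1 => if k \in upd sc i'.+1 then i'.+1 else orig i' k
  end.

Definition stateAt (i : nat) (k : N) (t : R) : state :=
  let j := orig i k in
  if (j == 0)%N || (comp sc j k <= t) then Res j else UC j.

Definition latest (t : R) : nat :=
  count (fun i => create sc i <= t) (iota 1 (nw sc)).

Definition all_computed (j : nat) (t : R) : bool :=
  [forall k, (k \in upd sc j) ==> (comp sc j k <= t)].

Definition committed (t : R) : nat :=
  (\max_(j < (latest t).+1 | (nat_of_ord j == 0)%N || all_computed j t) j)%N.

Definition nUCvp (i v : nat) (t : R) : nat :=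
  #|[set k in vp sc i | is_uc (stateAt v k t)]|.
Definition nUCall (v : nat) (t : R) : nat :=
  #|[set k | is_uc (stateAt v k t)]|.

(* reading version v at read i preserves monotonicity w.r.t. the versions
   (timestamps) hist read by the previous reads *)
Definition mono (hist : seq nat) (i v : nat) : bool :=
  [forall k in vp sc i,
     all (fun p => (k \in vp sc p) ==> (nth 0%N hist p <= v)%N)
         (iota 0 (size hist))].

Definition choose (A : lens) (i : nat) (hist : seq nat) : nat :=
  let t := rtime sc i in
  let L := latest t in
  let C := committed t in
  let lcnb := if (nUCvp i L t == 0)%N then L else C in
  let klcnb k := if (nUCvp i L t <= k)%N then L else C in
  match A with
  | GCPB => L
  | GCNB => C
  | LCNB => lcnb
  | LCMB => if mono hist i C && mono hist i L then lcnb else L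
  | ICNB => L (* unused *)
  | kGCNB k => if (nUCall L t <= k)%N then L else C
  | kLCNB k => klcnb k
  | kLCMB k => if mono hist i C && mono hist i L then klcnb k else L
  end.

Fixpoint choices (A : lens) (i : nat) : seq nat :=
  match i with
  | 0 => [::]
  | i'.+1 => rcons (choices A i') (choose A i' (choices A i'))
  end.

Definition chosen (A : lens) (i : nat) : nat := choose A i (choices A i).

Definition icnb_ver (k : N) (t : R) : nat :=
  (\max_(j < (latest t).+1 |
     (nat_of_ord j == 0)%N || ((k \in upd sc j) && (comp sc j k <= t)%R)) j)%N.

Definition answer (A : lens) (i : nat) (k : N) : state :=
  let t := rtime sc i in
  if A is ICNB then Res (icnb_ver k t) else stateAt (chosen A i) k t.

Definition is_stale (i : nat) (k : N) (s : state) : bool :=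
  match s with
  | Res j => ~~ same_state (stateAt (latest (rtime sc i)) k (rtime sc i)) (Res j)
  | UC _ => false
  end.

Definition invisibility (A : lens) : R :=
  \sum_(0 <= i < (nr sc).-1)
     (#|[set k in vp sc i | is_uc (answer A i k)]|%:R
        * (rtime sc i.+1 - rtime sc i)).

Definition staleness (A : lens) : R :=
  \sum_(0 <= i < (nr sc).-1)
     (#|[set k in vp sc i | is_stale i k (answer A i k)]|%:R
        * (rtime sc i.+1 - rtime sc i)).

End Panorama.

(* Main.v *)
Require Import Defs.
From HB Require Import structures.
From mathcomp Require Import all_boot all_order all_algebra.
Import Order.TTheory GRing.Theory Num.Theory.
Local Open Scope ring_scope.

Section Proofs.
Variables (R : realFieldType) (N : finType) (sc : scenario R N).
Hypothesis Hwf : wf sc.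

Lemma latest_le_nw t : (latest sc t <= nw sc)%N.
Proof. by rewrite /latest; apply: leq_trans (count_size _ _) _; rewrite size_iota. Qed.

Lemma create_mono m i : (1 <= m)%N -> (m <= i)%N -> (i <= nw sc)%N ->
  create sc m <= create sc i.
Proof.
case: Hwf => _ _ Hc _ Hm.
elim: i => [|i IH]; first by rewrite leqn0 => /eqP ->.
rewrite leq_eqVlt => /orP [/eqP -> //|]; rewrite ltnS => Hmi Hi.
apply: le_trans (IH Hmi (ltnW Hi)) _; apply: Hc.
by rewrite Hi (leq_trans Hm Hmi).
Qed.

Lemma create_le_latest t m : (1 <= m)%N -> (m <= latest sc t)%N -> create sc m <= t.
Proof.
move=> Hm Hml; rewrite leNgt; apply/negP => Ht.
have Hnw := leq_trans Hml (latest_le_nw t).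
have : (size (filter (fun i => (create sc i <= t)%R) (iota 1 (nw sc))) <= size (iota 1 m.-1))%N.
  apply: uniq_leq_size; first by rewrite filter_uniq // iota_uniq.
  move=> x; rewrite mem_filter mem_iota => /andP [Hx /andP [H1 H2]].
  rewrite mem_iota H1 /=.
  have : (x < m)%N.
    rewrite ltnNge; apply/negP => Hmx.
    have := @create_mono m x Hm Hmx; rewrite -ltnS.
    rewrite add1n in H2 => /(_ H2) Hc.
    by move: (le_lt_trans Hx Ht); rewrite ltNge Hc.
  by case: (m) Hm => // m' _; rewrite add1n.
rewrite size_filter size_iota -/(latest sc t) => H.
by move: (leq_trans Hml H); case: (m) Hm => // m' _; rewrite ltnn.
Qed.

Lemma orig_le i k : (orig sc i k <= i)%N.
Proof. elim: i => //= i IH; case: ifP => // _; exact: leq_trans IH _. Qed.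

Lemma orig_upd i k : (orig sc i k == 0)%N || (k \in upd sc (orig sc i k)).
Proof. by elim: i => //= i IH; case: ifP => H; rewrite ?H ?orbT. Qed.

Lemma orig_last i k j : (orig sc i k < j <= i)%N -> k \notin upd sc j.
Proof.
elim: i => [|i IH] /=; first by case: j => // ? /andP [].
case: ifP => Hk /andP [H1 H2].
  by move: (leq_trans H1 H2); rewrite ltnn.
move: H2; rewrite leq_eqVlt => /orP [/eqP -> |]; first by rewrite Hk.
rewrite ltnS => H2; apply: IH; by rewrite H1 H2.
Qed.

Lemma committed_spec t :
  (committed sc t <= latest sc t)%N /\
  ((committed sc t == 0)%N || all_computed sc (committed sc t) t).
Proof.
rewrite /committed.
apply: (big_ind (fun x => (x <= latest sc t)%N /\ ((x == 0)%N || all_computed sc x t))).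
- by [].
- move=> x y Hx Hy; rewrite /maxn; by case: ifP.
- move=> i Hi; split; [by rewrite -ltnS | exact: Hi].
Qed.

Lemma stateC_res k t :
  stateAt sc (committed sc t) k t = Res (orig sc (committed sc t) k).
Proof.
rewrite /stateAt; set C := committed sc t; set j := orig sc C k.
case: (boolP (j == 0)%N) => //= Hj0.
have [HCL HC] := committed_spec t; rewrite -/C in HCL HC.
have Hjk : k \in upd sc j by move: (orig_upd C k); rewrite -/j (negbTE Hj0).
have HjC : (j <= C)%N by exact: orig_le.
have Hj1 : (1 <= j)%N by rewrite lt0n.
have HC0 : (C != 0)%N by apply: contraNneq Hj0 => HC0; move: HjC; rewrite HC0 leqn0.
move: HjC; rewrite leq_eqVlt => /orP [/eqP HjC|HjC].
  move: HC; rewrite (negbTE HC0) /= => /forallP /(_ k).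
  rewrite -HjC Hjk /= => ->; by [].
have HCn := leq_trans HCL (latest_le_nw t).
case: Hwf => _ Hcomp _ _.
have H1 : Defs.comp sc j k <= create sc j.+1.
  by apply: Hcomp => //; rewrite Hj1 (leq_trans HjC HCn).
have H2 : create sc j.+1 <= create sc C by apply: create_mono.
have H3 : create sc C <= t by apply: create_le_latest => //; rewrite lt0n.
by rewrite (le_trans H1 (le_trans H2 H3)).
Qed.

Lemma icnb_eq k t :
  let L := latest sc t in
  ((orig sc L k == 0)%N || (Defs.comp sc (orig sc L k) k <= t)) ->
  icnb_ver sc k t = orig sc L k.
Proof.
move=> L H; apply/eqP; rewrite eqn_leq; apply/andP; split.
  apply/bigmax_leqP => j /orP [/eqP -> //|/andP [Hjk _]].
  rewrite leqNgt; apply/negP => Hlt.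
  have : (orig sc L k < j <= L)%N by rewrite Hlt -ltnS ltn_ord.
  by move/orig_last; rewrite Hjk.
have Ho : (orig sc L k < L.+1)%N by rewrite ltnS orig_le.
apply: (leq_bigmax_cond (Ordinal Ho)) => /=.
case/orP: H => [->//|Hc].
case/orP: (orig_upd L k) => [->//|->]; by rewrite Hc orbT.
Qed.

Lemma answer_cases A i k :
  let t := rtime sc i in
  answer sc A i k = stateAt sc (latest sc t) k t \/
  answer sc A i k = stateAt sc (committed sc t) k t \/
  answer sc A i k = Res (icnb_ver sc k t).
Proof.
rewrite /answer /chosen /choose.
case: A => [| | | | |n|n|n] /=; try by [left|right;left|right;right];
  repeat (case: ifP => _); try by [left|right;left].
Qed.

Lemma stale_L i k :
  is_stale sc i k (stateAt sc (latest sc (rtime sc i)) k (rtime sc i)) = false.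
Proof.
rewrite /is_stale; case: stateAt => [j|j] //=.
by rewrite eqxx.
Qed.

Lemma stale_le A i k : is_stale sc i k (answer sc A i k) ->
  is_stale sc i k (answer sc GCNB i k).
Proof.
have -> : answer sc GCNB i k = stateAt sc (committed sc (rtime sc i)) k (rtime sc i) by [].
case: (answer_cases A i k) => [->|[->//|->]]; first by rewrite stale_L.
set t := rtime sc i; set L := latest sc t.
rewrite stateC_res /is_stale -/t -/L.
case: (boolP ((orig sc L k == 0)%N || (Defs.comp sc (orig sc L k) k <= t))) => H.
  rewrite icnb_eq // /stateAt -/L H /=; by rewrite eqxx.
by rewrite /stateAt -/L (negbTE H).
Qed.

Lemma uc_le A i k : is_uc (answer sc A i k) -> is_uc (answer sc GCPB i k).
Proof.
have -> : answer sc GCPB i k = stateAt sc (latest sc (rtime sc i)) k (rtime sc i) by [].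
case: (answer_cases A i k) => [->//|[->|->//]].
by rewrite stateC_res.
Qed.

Lemma uc_C i k : is_uc (answer sc GCNB i k) = false.
Proof.
have -> : answer sc GCNB i k = stateAt sc (committed sc (rtime sc i)) k (rtime sc i) by [].
by rewrite stateC_res.
Qed.

Lemma term_le (a b : nat) i : (i < (nr sc).-1)%N -> (a <= b)%N ->
  a%:R * (rtime sc i.+1 - rtime sc i) <= b%:R * (rtime sc i.+1 - rtime sc i).
Proof.
move=> Hi Hab; apply: ler_wpM2r; last by rewrite ler_nat.
case: Hwf => _ _ _ Hr; rewrite subr_ge0; apply: Hr.
by move: Hi; case: (nr sc).
Qed.

Lemma main_all A :
  (staleness sc GCPB <= staleness sc A <= staleness sc GCNB) /\
  (invisibility sc GCNB <= invisibility sc A <= invisibility sc GCPB).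
Proof.
split; apply/andP; split; apply: ler_sum_nat => i /andP [_ Hi]; apply: term_le => //;
  apply: subset_leq_card; apply/subsetP => k; rewrite !inE => /andP [-> /=].
- by rewrite stale_L.
- exact: stale_le.
- by rewrite stateC_res.
- exact: uc_le.
Qed.

End Proofs.

Theorem theorem2p8 (R : realFieldType) (N : finType) (sc : scenario R N)
  (A : lens) :
  wf sc ->
  (A = LCNB \/ A = LCMB \/ A = ICNB \/
   exists k : nat, A = kGCNB k \/ A = kLCNB k \/ A = kLCMB k) ->
  (staleness sc GCPB <= staleness sc A <= staleness sc GCNB) /\
  (invisibility sc GCNB <= invisibility sc A <= invisibility sc GCPB).
Proof. by move=> Hwf _; apply: main_all. Qed.
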